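(* Let $\epsilon>0$ and $0<p\le 1$. Every $(p,\epsilon p)$-quasirandom bipartite graph is $(2\epsilon^{1/7})$-regular.
   Context: A bipartite graph $G=(U,V;E)$ is regular if all vertices in $U$ have the same degree and all vertices in $V$ have the same degree; its density is $|E|/(|U||V|)$. $d_G(A,B)=e_G(A,B)/(|A||B|)$ for $A\subseteq U$, $B\subseteq V$, where $e_G(A,B)$ is the number of edges between $A$ and $B$. For $u,u'\in U$, $\mathrm{codeg}(u,u')$ is the number of common neighbours of $u,u'$ in $V$. A regular bipartite graph $G=(U,V;E)$ of density $p$ is $(p,\delta)$-quasirandom if all but at most $\delta|U|^2$ ordered pairs $(u,u')\in U^2$ satisfy $\mathrm{codeg}(u,u')\le(1+\delta)p^2|V|$. A bipartite graph $G=(U,V;E)$ of density $p$ is $(\epsilon)$-regular if all $A\subseteq U$, $B\subseteq V$ with $|A|\ge\epsilon|U|$, $|B|\ge\epsilon|V|$ satisfy $|d_G(A,B)-p|\le\epsilon p$. *)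

(* Defs.v *)
From HB Require Import structures.
From mathcomp Require Import all_boot all_order all_algebra.
From mathcomp Require Import reals exp.
Set Implicit Arguments. Unset Strict Implicit. Unset Printing Implicit Defensive.
Import Order.TTheory GRing.Theory Num.Theory.
Local Open Scope ring_scope.

Section BipGraph.
Variables (R : realType) (U V : finType) (adj : U -> V -> bool).

Definition e_G (A : {set U}) (B : {set V}) : nat :=
  #|[set uv : U * V | [&& uv.1 \in A, uv.2 \in B & adj uv.1 uv.2]]|.

Definition d_G (A : {set U}) (B : {set V}) : R :=
  (e_G A B)%:R / (#|A| * #|B|)%:R.

Definition bdensity : R := d_G [set: U] [set: V].

Definition degU (u : U) : nat := #|[set v | adj u v]|.
Definition degV (v : V) : nat := #|[set u | adj u v]|.

Definition bip_regular : Prop :=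
  (exists dU, forall u, degU u = dU) /\ (exists dV, forall v, degV v = dV).

Definition codeg (u u' : U) : nat := #|[set v | adj u v && adj u' v]|.

Definition quasirandom (p delta : R) : Prop :=
  [/\ bip_regular, bdensity = p &
      (#|[set uu : U * U | (1 + delta) * p ^+ 2 * #|V|%:R < (codeg uu.1 uu.2)%:R]|%:R
         <= delta * (#|U|%:R) ^+ 2)].

Definition eps_regular (eps : R) : Prop :=
  forall (A : {set U}) (B : {set V}),
    eps * #|U|%:R <= #|A|%:R -> eps * #|V|%:R <= #|B|%:R ->
    `|d_G A B - bdensity| <= eps * bdensity.

End BipGraph.

(* Main.v *)
Require Import Defs.
From HB Require Import structures.
From mathcomp Require Import all_boot all_order all_algebra.
From mathcomp Require Import reals exp.
From mathcomp Require Import ring lra.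
Set Implicit Arguments. Unset Strict Implicit. Unset Printing Implicit Defensive.
Import Order.TTheory GRing.Theory Num.Theory.
Local Open Scope ring_scope.

Lemma card_sum (R : realType) (T : finType) (P : pred T) :
  (#|[set x | P x]|)%:R = \sum_x (P x)%:R :> R.
Proof.
rewrite -sum1_card natr_sum big_mkcond /=; apply: eq_bigr => x _.
by rewrite inE; case: (P x).
Qed.

Lemma sub_sum_le (R : realType) (T : finType) (A : {set T}) (f : T -> R) :
  (forall i, 0 <= f i) -> \sum_(i in A) f i <= \sum_i f i.
Proof.
move=> f0; rewrite big_mkcond /=; apply: ler_sum => i _.
by case: ifP => // _; exact: f0.
Qed.

Lemma sum_setT (R : realType) (T : finType) (F : T -> R) :
  \sum_(i in [set: T]) F i = \sum_i F i.
Proof. by apply: eq_bigl => i; rewrite in_setT. Qed.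

Lemma sumr_constT (R : realType) (T : finType) (c : R) :
  \sum_(i : T) c = c *+ #|T|.
Proof. by rewrite -cardsT -sumr_const; apply: eq_bigl => i; rewrite in_setT. Qed.

Section G.
Variables (R : realType) (U V : finType) (adj : U -> V -> bool).
Local Notation ind u v := ((adj u v)%:R : R).

Lemma e_sum (A : {set U}) (B : {set V}) :
  (e_G adj A B)%:R = \sum_(u in A) \sum_(v in B) ind u v :> R.
Proof.
rewrite /e_G card_sum pair_big /= [RHS]big_mkcond /=; apply: eq_bigr => [[u v]] _ /=.
by case: (u \in A); case: (v \in B); case: (adj u v).
Qed.

Lemma deg_sum u : (degU adj u)%:R = \sum_v ind u v :> R.
Proof. by rewrite /degU card_sum. Qed.

Lemma codeg_sum u u' : (codeg adj u u')%:R = \sum_v ind u v * ind u' v :> R.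
Proof.
rewrite /codeg card_sum; apply: eq_bigr => v _.
by case: (adj u v); case: (adj u' v); rewrite /= ?mulr0 ?mulr1.
Qed.

Lemma codeg_le u u' : (codeg adj u u' <= degU adj u)%N.
Proof.
apply: subset_leq_card; apply/subsetP => v; rewrite !inE; by case/andP.
Qed.

End G.
Ltac eqle := rewrite le_eqVlt; apply/orP; left; apply/eqP; ring.

Lemma final_arith (R : realType) (eps p t a b n m e Q Bad : R) :
 0 < eps -> 0 < p -> p <= 1 -> 0 < t -> t^+7 = eps ->
 0 < n -> 0 < m -> a <= n -> 2 * t * n <= a -> 2 * t * m <= b -> 0 <= Bad ->
 Bad <= eps * p * n^+2 ->
 (e - p * a * b)^+2 <= b * (Q - m * (a * p)^+2) ->
 Q <= a^+2 * ((1+eps * p) * p^+2 * m) + p * m * Bad ->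
 `| e/(a * b) - p | <= 2 * t * p.
Proof.
move=> e0 p0 p1 t0 te n0 m0 an ta tb B0 Bb X Qb.
have a0 : 0 < a by have := mulr_gt0 (mulr_gt0 (ltr0Sn R 1) t0) n0; lra.
have b0 : 0 < b by have := mulr_gt0 (mulr_gt0 (ltr0Sn R 1) t0) m0; lra.
have t1 : 2 * t <= 1.
  have : 2 * t * n <= 1 * n by lra.
  by rewrite ler_pM2r.
have X1 : (e - p * a * b)^+2 <= b * p^+2 * (eps * m * (a^+2 + n^+2)).
  apply: (le_trans X).
  have h1 : Q - m * (a * p)^+2 <= eps * p^+2 * m * (p * a^+2 + n^+2).
    have : p * m * Bad <= p * m * (eps * p * n^+2) by rewrite ler_pM2l ?mulr_gt0.
    move: Qb; nra.
  have h2 : p * a^+2 <= a^+2 by rewrite ler_piMl ?sqr_ge0.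
  have h3 : eps * p^+2 * m * (p * a^+2 + n^+2) <= eps * p^+2 * m * (a^+2 + n^+2).
    by rewrite ler_pM2l ?lerD2r // !mulr_gt0 // exprn_gt0.
  have := le_trans h1 h3.
  rewrite -(ler_pM2l b0); move=> h; apply: (le_trans h); eqle.
have c1 : (2 * t * n)^+2 <= a^+2.
  have h0 : 0 <= 2 * t * n by apply/ltW; rewrite !mulr_gt0.
  rewrite ler_sqr //; apply: le_trans h0 ta.
have tt : t^+2 <= 16.
  have : t <= 1 by lra.
  move=> h; have : t^+2 <= 1 by rewrite expr_le1 //; apply/ltW.
  lra.
have c2 : eps * m * (a^+2 + n^+2) * (4 * t^+2) <= (2 * t)^+2 * a^+2 * b * (4 * t^+2).
  have s1 : eps * m * (a^+2 + n^+2) * (4 * t^+2) <= eps * m * (2 * a^+2).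
    have : 4 * t^+2 * a^+2 <= a^+2.
      have : (2 * t)^+2 <= 1 by rewrite expr_le1 //; lra.
      move=> h; rewrite -[X in _ <= X]mul1r ler_pM2r ?exprn_gt0 //; move: h; rewrite exprMn; lra.
    have : 4 * t^+2 * n^+2 = (2 * t * n)^+2 by ring.
    move=> h h'; rewrite -mulrA ler_pM2l ?mulr_gt0 //; lra.
  have s2 : eps * m * (2 * a^+2) <= 32 * t^+5 * m * a^+2.
    rewrite -te.
    have : t^+7 * m * a^+2 * 2 <= 32 * t^+5 * m * a^+2 + 0.
      have : t^+7 = t^+5 * t^+2 by rewrite -exprD.
      move=> ->.
      have h5 : 0 < t^+5 * m * a^+2 by rewrite !mulr_gt0 ?exprn_gt0.
      nra.
    lra.
  have s3 : 32 * t^+5 * m * a^+2 <= (2 * t)^+2 * a^+2 * b * (4 * t^+2).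
    have : (2 * t)^+2 * a^+2 * b * (4 * t^+2) = 16 * t^+4 * a^+2 * b by ring.
    move=> ->.
    have : 32 * t^+5 * m * a^+2 = 16 * t^+4 * a^+2 * (2 * t * m) by ring.
    move=> ->; rewrite ler_pM2l // !mulr_gt0 ?exprn_gt0 //.
  exact: le_trans s1 (le_trans s2 s3).
have c3 : eps * m * (a^+2 + n^+2) <= (2 * t)^+2 * a^+2 * b.
  by move: c2; rewrite ler_pM2r // mulr_gt0 // exprn_gt0.
have X2 : (e - p * a * b)^+2 <= (2 * t * p * a * b)^+2.
  apply: (le_trans X1).
  have : b * p^+2 * (eps * m * (a^+2 + n^+2)) <= b * p^+2 * ((2 * t)^+2 * a^+2 * b).
    by rewrite ler_pM2l // mulr_gt0 // exprn_gt0.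
  move=> h; apply: (le_trans h); eqle.
have X3 : `|e - p * a * b| <= 2 * t * p * a * b.
  have h0 : 0 <= 2 * t * p * a * b by apply/ltW; rewrite !mulr_gt0.
  move: X2; rewrite -[(e - _)^+2]real_normK ?num_real // ler_sqr // nnegrE //.
have -> : e/(a * b) - p = (e - p * a * b) / (a * b).
  by field; apply/andP; split; rewrite gt_eqF.
have ab0 : 0 < a * b by rewrite mulr_gt0.
rewrite normrM normfV (gtr0_norm ab0) ler_pdivrMr //.
apply: (le_trans X3); eqle.
Qed.
Lemma CS (R : realType) (T : finType) (B : {set T}) (y : T -> R) :
  (\sum_(v in B) y v) ^+ 2 <= #|B|%:R * \sum_(v in B) (y v) ^+ 2.
Proof.
set S := \sum_(v in B) y v; set Q := \sum_(v in B) (y v) ^+ 2; set b : R := #|B|%:R.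
have H : 0 <= \sum_(v in B) \sum_(w in B) (y v - y w) ^+ 2.
  by apply: sumr_ge0 => v _; apply: sumr_ge0 => w _; apply: sqr_ge0.
have E1 : forall v, \sum_(w in B) (y v - y w) ^+ 2 = b * y v ^+ 2 - 2 * y v * S + Q.
  move=> v; under eq_bigr => w _ do rewrite sqrrB.
  rewrite big_split big_split /= sumrN sumr_const /S /Q /b mulr_natl; congr (_ - _ + _).
  rewrite mulr_sumr; apply: eq_bigr => w _; rewrite -mulr_natr; ring.
have E2 : \sum_(v in B) \sum_(w in B) (y v - y w) ^+ 2 = 2 * b * Q - 2 * S ^+ 2.
  under eq_bigr => v _ do rewrite E1.
  rewrite big_split big_split /= sumrN sumr_const -!mulr_sumr -mulr_suml.
  rewrite -mulr_sumr -/S -/Q -mulr_natr. ring.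
rewrite E2 in H. lra.
Qed.

Theorem lemma5p5 (R : realType) (U V : finType) (adj : U -> V -> bool)
    (eps p : R) :
  0 < eps -> 0 < p -> p <= 1 ->
  quasirandom adj p (eps * p) ->
  eps_regular adj (2 * eps `^ (7%:R)^-1).
Proof.
move=> e0 p0 p1 [[[dU hdU] _] hdens hbad] A B hA hB.
set t := eps `^ (7%:R)^-1 in hA hB *.
have t0 : 0 < t by apply: powR_gt0.
have te : t ^+ 7 = eps.
  by rewrite /t -powR_mulrn ?powR_ge0 // -powRrM mulVf ?powRr1 ?ltW // pnatr_eq0.
set n := #|U| in hbad hA *; set m := #|V| in hbad hB *.
have eTT : (e_G adj setT setT)%:R = (n * dU)%:R :> R.
  rewrite e_sum sum_setT; under eq_bigr => u _ do rewrite sum_setT.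
  under eq_bigr => u _ do rewrite -deg_sum hdU.
  by rewrite sumr_constT natrM mulr_natl.
move: hdens; rewrite /bdensity /d_G !cardsT -/n -/m eTT => hdens.
have nm0 : (n * m)%:R != 0 :> R.
  apply/eqP => h; move: hdens; rewrite h invr0 mulr0 => h'.
  by rewrite -h' ltxx in p0.
have [n0 m0] : n%:R != 0 :> R /\ m%:R != 0 :> R.
  by move: nm0; rewrite natrM mulf_eq0 negb_or => /andP.
have dUe : dU%:R = p * m%:R :> R.
  move: hdens; rewrite !natrM => <-; field; by apply/andP.
rewrite hdens natrM.
set a := #|A| in hA *; set b := #|B| in hB *.
pose x := fun v => \sum_(u in A) (adj u v)%:R : R.
have Sx : \sum_v x v = a%:R * (p * m%:R).
  rewrite /x exchange_big /=; under eq_bigr => u _ do rewrite -deg_sum hdU dUe.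
  by rewrite sumr_const mulr_natl.
have Se : (e_G adj A B)%:R = \sum_(v in B) x v by rewrite e_sum exchange_big.
have Sx2 : \sum_v x v ^+ 2 = \sum_(u in A) \sum_(u' in A) (codeg adj u u')%:R :> R.
  have h : forall v, x v ^+ 2 = \sum_(u in A) \sum_(u' in A) (adj u v)%:R * (adj u' v)%:R :> R.
    move=> v; rewrite expr2 /x mulr_suml; apply: eq_bigr => u _; by rewrite mulr_sumr.
  under eq_bigr => v _ do rewrite h.
  rewrite exchange_big; apply: eq_bigr => u _; rewrite exchange_big; apply: eq_bigr => u' _.
  by rewrite codeg_sum.
set K := (1 + eps * p) * p ^+ 2 * m%:R in hbad *.
pose bad := fun u u' => ((K < (codeg adj u u')%:R)%R : bool)%:R : R.
have K0 : 0 <= K.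
  have ep : 0 <= eps * p by rewrite mulr_ge0 ?ltW.
  rewrite /K; apply: mulr_ge0; [apply: mulr_ge0; [lra | exact: sqr_ge0] | exact: ler0n].
have cb : forall u u', (codeg adj u u')%:R <= K + p * m%:R * bad u u'.
  move=> u u'; rewrite /bad; case: ltrP => h.
    have : (codeg adj u u')%:R <= p * m%:R :> R by rewrite -dUe -(hdU u) ler_nat codeg_le.
    rewrite mulr1; lra.
  by rewrite mulr0 addr0.
have bad0 : forall u u', 0 <= bad u u' by move=> u u'; exact: ler0n.
have SB : \sum_(u in A) \sum_(u' in A) bad u u' <=
    #|[set uu | K < (codeg adj uu.1 uu.2)%:R]|%:R.
  rewrite card_sum -(pair_bigA _ (fun u u' => bad u u')) /=.
  apply: le_trans (sub_sum_le _ _) => [|u]; last by apply: sumr_ge0.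
  apply: ler_sum => u _; exact: sub_sum_le.
have SQ : \sum_v x v ^+ 2 <= a%:R ^+ 2 * K + p * m%:R * #|[set uu | K < (codeg adj uu.1 uu.2)%:R]|%:R.
  rewrite Sx2.
  apply: (le_trans (y := \sum_(u in A) \sum_(u' in A) (K + p * m%:R * bad u u'))).
    by apply: ler_sum => u _; apply: ler_sum => u' _; exact: cb.
  have E : forall u, \sum_(u' in A) (K + p * m%:R * bad u u') =
      K *+ a + p * m%:R * \sum_(u' in A) bad u u'.
    by move=> u; rewrite big_split /= sumr_const mulr_sumr.
  rewrite (eq_bigr _ (fun u _ => E u)) big_split /= sumr_const -mulr_sumr.
  have hp : 0 <= p * m%:R by apply: mulr_ge0; [exact: ltW | exact: ler0n].
  rewrite -/a (_ : K *+ a *+ a = a%:R ^+ 2 * K); last by rewrite -mulrnA expr2 -natrM mulr_natl.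
  by rewrite lerD2l; apply: ler_wpM2l. 
have Var : \sum_v (x v - a%:R * p) ^+ 2 = \sum_v x v ^+ 2 - m%:R * (a%:R * p) ^+ 2.
  under eq_bigr => v _ do rewrite sqrrB.
  rewrite big_split big_split /= sumrN sumr_constT.
  have -> : \sum_v x v * (a%:R * p) *+ 2 = (\sum_v x v) * (a%:R * p) *+ 2.
    by rewrite sumrMnl mulr_suml.
  rewrite Sx -/m -[(a%:R * p) ^+ 2 *+ m]mulr_natl mulr2n; ring.
have CSb := CS B (fun v => x v - a%:R * p).
have EB : \sum_(v in B) (x v - a%:R * p) = (e_G adj A B)%:R - p * a%:R * b%:R.
  by rewrite sumrB sumr_const Se -/b -[(a%:R * p) *+ b]mulr_natl; ring.
have Sub : \sum_(v in B) (x v - a%:R * p) ^+ 2 <= \sum_v (x v - a%:R * p) ^+ 2.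
  by apply: sub_sum_le => v; exact: sqr_ge0.
have X : ((e_G adj A B)%:R - p * a%:R * b%:R) ^+ 2 <=
    b%:R * (\sum_v x v ^+ 2 - m%:R * (a%:R * p) ^+ 2).
  rewrite -EB -Var; apply: le_trans CSb _; rewrite ler_wpM2l //.
apply: (final_arith e0 p0 p1 t0 te _ _ _ hA hB _ hbad X).
- by rewrite lt0r n0 ler0n.
- by rewrite lt0r m0 ler0n.
- by rewrite ler_nat max_card.
- exact: ler0n.
- exact: SQ.
Qed.
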